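(* Consider the species $T_{100},T_{010},T_{001}$ with concentrations $x,y,z$, complexes $C_1=2T_{100}$, $C_2=2T_{010}$, $C_3=2T_{001}$, $C_4=T_{100}+T_{010}$, $C_5=T_{100}+T_{001}$, $C_6=T_{010}+T_{001}$, and the network $\mathcal N$ with the 18 reactions $C_1\to C_4,\ C_1\to C_5,\ C_2\to C_4,\ C_2\to C_6,\ C_3\to C_5,\ C_3\to C_6,\ C_4\to C_1,\ C_4\to C_2,\ C_4\to C_5,\ C_4\to C_6,\ C_5\to C_1,\ C_5\to C_3,\ C_5\to C_4,\ C_5\to C_6,\ C_6\to C_2,\ C_6\to C_3,\ C_6\to C_4,\ C_6\to C_5$, with rate constants $k(i,j)=i$ for each reaction $C_i\to C_j$. Then the mass-action system of $\mathcal N$ coincides with the mass-action system of the network $\mathcal N'$ with reactions $C_1\rightleftarrows C_6$, $C_2\rightleftarrows C_5$, $C_3\rightleftarrows C_4$ and rate constants $k(1,6)=1$, $k(6,1)=6$, $k(2,5)=2$, $k(5,2)=5$, $k(3,4)=3$, $k(4,3)=4$; $\mathcal N'$ is weakly reversible with deficiency one; and this mass-action system has exactly one positive equilibrium in each positive stoichiometric compatibility class $\{(x,y,z)\in\mathbb R^3_{>0}: x+y+z=c\}$, $c>0$. *)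

(* Defs.v *)
From Stdlib Require Import Reals.
From HB Require Import structures.
From mathcomp Require Import all_boot all_order all_algebra.

Set Implicit Arguments.
Unset Strict Implicit.
Unset Printing Implicit Defensive.

(** Species T100, T010, T001 (concentrations x, y, z) are indexed 0, 1, 2.
    A complex is its triple of stoichiometric coefficients. *)
Definition complex := (nat * nat * nat)%type.

Definition coef (c : complex) (j : nat) : nat :=
  match j with 0 => c.1.1 | 1 => c.1.2 | 2 => c.2 | _ => 0 end.

Definition C (i : nat) : complex :=
  match i with
  | 1 => (2, 0, 0) | 2 => (0, 2, 0) | 3 => (0, 0, 2)
  | 4 => (1, 1, 0) | 5 => (1, 0, 1) | 6 => (0, 1, 1)
  | _ => (0, 0, 0) end.

Definition network := seq (complex * complex).

Definition rated_network := seq (complex * complex * R).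

Definition mon (c : complex) (x y z : R) : R :=
  Rmult (Rmult (pow x c.1.1) (pow y c.1.2)) (pow z c.2).

Definition ma_rhs (K : rated_network) (x y z : R) (j : nat) : R :=
  List.fold_right
    (fun r acc => Rplus (Rmult (Rmult r.2 (mon r.1.1 x y z))
                             (Rminus (INR (coef r.1.2 j)) (INR (coef r.1.1 j)))) acc)
    R0 K.

Definition rrxn (i j : nat) : complex * complex * R := (C i, C j, INR i).
Definition rxn (i j : nat) : complex * complex := (C i, C j).

Definition N_rated : rated_network :=
  [:: rrxn 1 4; rrxn 1 5; rrxn 2 4; rrxn 2 6; rrxn 3 5; rrxn 3 6;
      rrxn 4 1; rrxn 4 2; rrxn 4 5; rrxn 4 6; rrxn 5 1; rrxn 5 3;
      rrxn 5 4; rrxn 5 6; rrxn 6 2; rrxn 6 3; rrxn 6 4; rrxn 6 5].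

Definition N' : network :=
  [:: rxn 1 6; rxn 6 1; rxn 2 5; rxn 5 2; rxn 3 4; rxn 4 3].

Definition N'_rated : rated_network :=
  [:: rrxn 1 6; rrxn 6 1; rrxn 2 5; rrxn 5 2; rrxn 3 4; rrxn 4 3].

Definition complexes (N : network) : seq complex :=
  undup (flatten [seq [:: r.1; r.2] | r <- N]).

Definition weakly_reversible (N : network) : Prop :=
  forall r, r \in N ->
    exists p : seq complex,
      path (fun u v : complex => (u, v) \in N) r.2 p /\ last r.2 p = r.1.

Definition ulink (N : network) : rel (seq_sub (complexes N)) :=
  fun u v => ((val u, val v) \in N) || ((val v, val u) \in N).

Definition n_linkage (N : network) : nat :=
  n_comp (@ulink N) (fun _ => true).

Definition stoich_mx (N : network) : 'M[rat]_(size N, 3) :=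
  \matrix_(i < size N, j < 3)
     (((coef (nth (C 0, C 0) N i).2 j)%:R - (coef (nth (C 0, C 0) N i).1 j)%:R)%R).

Definition deficiency (N : network) : int :=
  ((size (complexes N))%:Z - (n_linkage N)%:Z - (\rank (stoich_mx N))%:Z)%R.

(* Main.v *)
Require Import Defs.
From Stdlib Require Import Reals.
From HB Require Import structures.
From mathcomp Require Import all_boot all_order all_algebra.
From Stdlib Require Import Lra Psatz.
Local Open Scope R_scope.

Lemma part1 (x y z : R) (j : nat) : (j < 3)%nat ->
     ma_rhs N_rated x y z j = ma_rhs N'_rated x y z j.
Proof.
case: j => [|[|[|j]]] // _; rewrite /ma_rhs /= /mon /=; rewrite ?S_INR ?INR_0; ring.
Qed.

Lemma rhs0 x y z : ma_rhs N'_rated x y z 0 = -2*x^2+12*y*z+2*y^2-5*x*z+3*z^2-4*x*y.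
Proof. rewrite /ma_rhs /= /mon /=; rewrite ?S_INR ?INR_0; ring. Qed.
Lemma rhs1 x y z : ma_rhs N'_rated x y z 1 = x^2-6*y*z-4*y^2+10*x*z+3*z^2-4*x*y.
Proof. rewrite /ma_rhs /= /mon /=; rewrite ?S_INR ?INR_0; ring. Qed.
Lemma rhs2 x y z : ma_rhs N'_rated x y z 2 =
  - (ma_rhs N'_rated x y z 0 + ma_rhs N'_rated x y z 1).
Proof. rewrite /ma_rhs /= /mon /=; rewrite ?S_INR ?INR_0; ring. Qed.

Lemma part2 : weakly_reversible N'.
Proof.
have H : all (fun r => (r.2, r.1) \in N') N' by [].
move=> r Hr; exists [:: r.1]; split; last by [].
by rewrite /= andbT; move/allP: H => /(_ r Hr).
Qed.

Definition TT := seq_sub (complexes N').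
Definition LL : seq TT :=
  [:: @SeqSub _ (complexes N') (0,1,1)%N (erefl true);
      @SeqSub _ (complexes N') (2,0,0)%N (erefl true);
      @SeqSub _ (complexes N') (1,0,1)%N (erefl true);
      @SeqSub _ (complexes N') (0,2,0)%N (erefl true);
      @SeqSub _ (complexes N') (1,1,0)%N (erefl true);
      @SeqSub _ (complexes N') (0,0,2)%N (erefl true)].
Lemma EL : Finite.enum TT = LL.
Proof. apply: (inj_map val_inj). by rewrite unlock val_seq_sub_enum. Qed.

Lemma lk : n_linkage N' = 3%N.
Proof.
rewrite /n_linkage /n_comp_mem /roots card.unlock /enum_mem -/TT EL.
rewrite /fingraph.root /pick /connect /rgraph /=. rewrite card.unlock /enum_mem -/TT EL.
vm_compute. reflexivity.
Qed.
Lemma sz : size (complexes N') = 6%N.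
Proof. vm_compute. reflexivity. Qed.

Section RankPart.
Import GRing.Theory.
Local Open Scope ring_scope.

Definition mk (m n : nat) (l : seq (seq rat)) : 'M[rat]_(m,n) :=
  \matrix_(i < m, j < n) nth 0 (nth [::] l i) j.
Definition Bm := mk 6 2 [:: [:: 1; 0]; [:: -1; 0]; [:: 0; 1]; [:: 0; -1]; [:: -1; -1]; [:: 1; 1]].
Definition Mm := mk 2 3 [:: [:: -2; 1; 1]; [:: 1; -2; 1]].
Definition Sm := mk 2 6 [:: [:: 1; 0; 0; 0; 0; 0]; [:: 0; 0; 1; 0; 0; 0]].
Definition Bi := mk 3 2 [:: [:: -2/3; -1/3]; [:: -1/3; -2/3]; [:: 0; 0]].

Lemma E1 : stoich_mx N' = Bm *m Mm.
Proof.
apply/matrixP => i j; rewrite !mxE !big_ord_recr big_ord0 /= !mxE.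
case: i => [[|[|[|[|[|[|i]]]]]] Hi] //; case: j => [[|[|[|j]]] Hj] //;
  apply/eqP; vm_compute; reflexivity.
Qed.
Lemma E2a : stoich_mx N' *m Bi = Bm.
Proof.
apply/matrixP => i j; rewrite !mxE !big_ord_recr big_ord0 /= !mxE.
case: i => [[|[|[|[|[|[|i]]]]]] Hi] //; case: j => [[|[|j]] Hj] //;
  apply/eqP; vm_compute; reflexivity.
Qed.
Lemma E2 : Sm *m (stoich_mx N' *m Bi) = 1%:M.
Proof.
rewrite E2a; apply/matrixP => i j; rewrite !mxE !big_ord_recr big_ord0 /= !mxE.
case: i => [[|[|i]] Hi] //; case: j => [[|[|j]] Hj] //;
  apply/eqP; vm_compute; reflexivity.
Qed.

Lemma rk : \rank (stoich_mx N') = 2%N.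
Proof.
apply/eqP; rewrite eqn_leq; apply/andP; split.
  by rewrite E1; apply: leq_trans (mxrankM_maxr _ _) (rank_leq_row _).
have := mxrankM_maxr Sm (stoich_mx N' *m Bi); rewrite E2 mxrank1 => h.
exact: leq_trans h (mxrankM_maxl _ _).
Qed.

Lemma part3 : deficiency N' = Posz 1.
Proof. by rewrite /deficiency sz lk rk. Qed.
End RankPart.

Definition q v := 14*v^4+28*v^3-114*v^2+45*v+33.

Lemma q_neg v : 124/100 <= v <= 125/100 -> q v < 0.
Proof. intros [h1 h2]. unfold q.
set w := v - 124/100. replace v with (124/100 + w) by (unfold w; ring).
assert (0 <= w) by (unfold w; lra). assert (w <= 1/100) by (unfold w; lra).
nra.
Qed.

Definition D a b := 14*(a^3+a^2*b+a*b^2+b^3)+28*(a^2+a*b+b^2)-114*(a+b)+45.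
Lemma D_neg a b : 12247/10000 <= a <= 124/100 -> 12247/10000 <= b <= 124/100 -> D a b < 0.
Proof. intros [h1 h2] [h3 h4]. unfold D.
set s := a - 12247/10000. set t := b - 12247/10000.
replace a with (12247/10000 + s) by (unfold s; ring).
replace b with (12247/10000 + t) by (unfold t; ring).
assert (0 <= s) by (unfold s; lra). assert (s <= 2/100) by (unfold s; lra).
assert (0 <= t) by (unfold t; lra). assert (t <= 2/100) by (unfold t; lra).
nra.
Qed.

Lemma q_diff a b : q b - q a = (b - a) * D a b.
Proof. unfold q, D; ring. Qed.

Lemma q_uniq v w : 12247/10000 <= v <= 125/100 -> 12247/10000 <= w <= 125/100 ->
  q v = 0 -> q w = 0 -> v = w.
Proof.
intros Hv Hw Qv Qw.
assert (v < 124/100).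
{ destruct (Rlt_or_le v (124/100)) as [h|h]; [exact h|].
  have := q_neg v; lra. }
assert (w < 124/100).
{ destruct (Rlt_or_le w (124/100)) as [h|h]; [exact h|].
  have := q_neg w; lra. }
destruct (Rtotal_order v w) as [h|[h|h]]; [|exact h|].
- have := q_diff v w; have := D_neg v w; nra.
- have := q_diff w v; have := D_neg w v; nra.
Qed.

Lemma q_ex : {v : R | 123/100 <= v <= 124/100 /\ q v = 0}.
Proof.
assert (Hc : continuity (fun v => - q v)) by (unfold q; reg).
destruct (IVT (fun v => - q v) (123/100) (124/100) Hc) as [v [Hv Hq]].
- lra.
- unfold q; lra.
- unfold q; lra.
- exists v; split; [exact Hv| lra].
Qed.

Lemma char x y z : 0 < x -> 0 < y -> 0 < z ->
  -2*x^2+12*y*z+2*y^2-5*x*z+3*z^2-4*x*y = 0 ->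
  x^2-6*y*z-4*y^2+10*x*z+3*z^2-4*x*y = 0 ->
  q (y/z) = 0 /\ 12247/10000 <= y/z <= 125/100 /\
  x/z = (3 - 2*(y/z)^2) / (4*(y/z) - 5).
Proof.
intros hx hy hz f0 g0.
set u := x/z. set v := y/z.
have Hx : x = u*z by (unfold u; field; lra).
have Hy : y = v*z by (unfold v; field; lra).
have hu : 0 < u by (unfold u; apply Rdiv_lt_0_compat).
have hv : 0 < v by (unfold v; apply Rdiv_lt_0_compat).
rewrite Hx Hy in f0 g0.
have hz2 : 0 < z^2 by nra.
have f1 : z^2 * (-2*u^2+12*v+2*v^2-5*u+3-4*u*v) = 0 by rewrite -f0; ring.
have g1 : z^2 * (u^2-6*v-4*v^2+10*u+3-4*u*v) = 0 by rewrite -g0; ring.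
have f2 : -2*u^2+12*v+2*v^2-5*u+3-4*u*v = 0.
{ destruct (Rmult_integral _ _ f1) as [h|h]; [lra|exact h]. }
have g2 : u^2-6*v-4*v^2+10*u+3-4*u*v = 0.
{ destruct (Rmult_integral _ _ g1) as [h|h]; [lra|exact h]. }
have E1 : u^2 - 6*v - 2*v^2 + 5*u = 0 by lra.
have E2 : u * (4*v - 5) = 3 - 2*v^2 by lra.
have Q : 4*v - 5 < 0 /\ 3 < 2*v^2.
{ destruct (Rtotal_order (4*v-5) 0) as [h|[h|h]].
  - split; [exact h| nra].
  - exfalso; rewrite h in E2; nra.
  - exfalso; nra. }
destruct Q as [Q1 Q2].
split; [|split; [split|]].
- have : -2 * q v = (4*v-5)^2 * (u^2 - 6*v - 2*v^2 + 5*u).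
  { unfold q. have : (4*v-5)^2 * (u^2 - 6*v - 2*v^2 + 5*u) =
      (u*(4*v-5))^2 + 5*(u*(4*v-5))*(4*v-5) - (2*v^2+6*v)*(4*v-5)^2 by ring.
    rewrite E2 => ->; ring. }
  rewrite E1; lra.
- nra.
- lra.
- rewrite -E2; field; lra.
Qed.

Lemma part4 (c : R) : 0 < c ->
  exists! p : R * R * R,
    0 < p.1.1 /\ 0 < p.1.2 /\ 0 < p.2 /\ p.1.1 + p.1.2 + p.2 = c /\
    (forall j : nat, (j < 3)%nat -> ma_rhs N'_rated p.1.1 p.1.2 p.2 j = 0).
Proof.
intros hc.
destruct q_ex as [v0 [Hv0 Qv0]].
set u0 := (3 - 2*v0^2) / (4*v0 - 5).
have hu0 : 0 < u0.
{ unfold u0. apply Rdiv_neg_neg; nra. }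
have Hu0 : u0 * (4*v0-5) = 3 - 2*v0^2 by (unfold u0; field; lra).
have E1 : u0^2 - 6*v0 - 2*v0^2 + 5*u0 = 0.
{ have h : (4*v0-5)^2 * (u0^2 - 6*v0 - 2*v0^2 + 5*u0) = -2 * q v0.
  { unfold q. have : (4*v0-5)^2 * (u0^2 - 6*v0 - 2*v0^2 + 5*u0) =
      (u0*(4*v0-5))^2 + 5*(u0*(4*v0-5))*(4*v0-5) - (2*v0^2+6*v0)*(4*v0-5)^2 by ring.
    rewrite Hu0 => ->; ring. }
  rewrite Qv0 in h.
  destruct (Rmult_integral _ _ (eq_trans h (Rmult_0_r _))) as [h'|h']; [nra|exact h']. }
set z0 := c / (1 + u0 + v0).
have hz0 : 0 < z0 by (unfold z0; apply Rdiv_lt_0_compat; lra).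
have f0 : ma_rhs N'_rated (u0*z0) (v0*z0) z0 0 = 0.
{ rewrite rhs0. have : -2*(u0*z0)^2+12*(v0*z0)*z0+2*(v0*z0)^2-5*(u0*z0)*z0+3*z0^2-4*(u0*z0)*(v0*z0)
    = z0^2 * ((-2)*(u0^2 - 6*v0 - 2*v0^2 + 5*u0) - (2*v0^2 - 3 + u0*(4*v0-5))) by ring.
  move=> ->; rewrite E1 Hu0; ring. }
have g0 : ma_rhs N'_rated (u0*z0) (v0*z0) z0 1 = 0.
{ rewrite rhs1. have : (u0*z0)^2-6*(v0*z0)*z0-4*(v0*z0)^2+10*(u0*z0)*z0+3*z0^2-4*(u0*z0)*(v0*z0)
    = z0^2 * ((u0^2 - 6*v0 - 2*v0^2 + 5*u0) - (2*v0^2 - 3 + u0*(4*v0-5))) by ring.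
  move=> ->; rewrite E1 Hu0; ring. }
exists (u0*z0, v0*z0, z0); split.
- cbn [fst snd]; split; [nra|split; [nra|split; [exact hz0|split]]].
  + unfold z0; field; lra.
  + move=> j; case: j => [|[|[|j]]] // _;
    first [exact f0|exact g0|rewrite rhs2 f0 g0; ring].
- move=> [[x y] z] [hx [hy [hz [hs Heq]]]]; simpl in hx, hy, hz, hs.
  have f1 := Heq 0%N erefl. have g1 := Heq 1%N erefl.
  rewrite rhs0 in f1; rewrite rhs1 in g1.
  destruct (char x y z hx hy hz f1 g1) as [Qv [Hr Hu]].
  have hv : y / z = v0 by (apply (q_uniq _ _ Hr); [lra| exact Qv| exact Qv0]).
  have hu : x / z = u0 by rewrite Hu hv.
  have Hx : x = u0 * z by (rewrite -hu; field; lra).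
  have Hy : y = v0 * z by (rewrite -hv; field; lra).
  have Hz : z = z0 by (unfold z0; rewrite -hs Hx Hy; field; lra).
  rewrite Hx Hy Hz; reflexivity.
Qed.

Theorem mainTheorem7 :
  (forall (x y z : R) (j : nat), (j < 3)%nat ->
     ma_rhs N_rated x y z j = ma_rhs N'_rated x y z j)
  /\ weakly_reversible N'
  /\ deficiency N' = Posz 1
  /\ (forall c : R, 0 < c ->
        exists! p : R * R * R,
          0 < p.1.1 /\ 0 < p.1.2 /\ 0 < p.2 /\ p.1.1 + p.1.2 + p.2 = c /\
          (forall j : nat, (j < 3)%nat -> ma_rhs N'_rated p.1.1 p.1.2 p.2 j = 0)).
Proof.
split; [exact part1|split; [exact part2|split; [exact part3|exact part4]]].
Qed.
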